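(* Let $M=\langle W,\leq,R,V\rangle$ be a brIML1-model, let $\gamma$ be a formula such that $w\nVdash\gamma$ for some $w\in W$, and let $\Sigma$ be the set of all subformulas of $\gamma$. Then the filtered frame $F_\Sigma=\langle W_\Sigma,\leq_\Sigma,R_\Sigma\rangle$ is a (well-defined) brIML1-frame.
   Context: Formulas are built from a denumerable set $PV$ of propositional variables and $\bot$ using $\land,\lor,\rightarrow$ and unary $\Delta$. A brIML1-frame is a triple $\langle W,\leq,R\rangle$, $W$ non-empty, $\leq$ a partial order on $W$, $R$ a binary relation with (1) $w\leq v\Rightarrow wRv$ and (2) ($w\leq v$ and $vRu$) $\Rightarrow wRu$. A brIML1-model adds $V:PV\to P(W)$ upward closed under $\leq$; forcing: atoms via $V$, $\bot$ never, $\land,\lor$ pointwise, $w\Vdash\varphi\rightarrow\psi$ iff every $v\geq w$ has $v\nVdash\varphi$ or $v\Vdash\psi$, $w\Vdash\Delta\varphi$ iff every $v$ with $wRv$ has $v\Vdash\varphi$. Filtration: $w\sim v$ iff $w$ and $v$ force the same formulas of $\Sigma$; $[w]$ is the class of $w$; $W_\Sigma=\{[w]:w\in W\}$; $[w]\leq_\Sigma[v]$ iff for every $\alpha\in\Sigma$, $w\Vdash\alpha$ implies $v\Vdash\alpha$; $[w]R_\Sigma[v]$ iff for every formula $\Delta\beta\in\Sigma$, $w\Vdash\Delta\beta$ implies $v\Vdash\beta$. *)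

(* Defs.v *)
From Stdlib Require Import Classical.
Set Implicit Arguments.

Inductive form : Type :=
| Var : nat -> form
| Bot : form
| And : form -> form -> form
| Or : form -> form -> form
| Imp : form -> form -> form
| Delta : form -> form.

Inductive subf : form -> form -> Prop :=
| subf_refl : forall g, subf g g
| subf_andl : forall a b g, subf (And a b) g -> subf a g
| subf_andr : forall a b g, subf (And a b) g -> subf b g
| subf_orl : forall a b g, subf (Or a b) g -> subf a g
| subf_orr : forall a b g, subf (Or a b) g -> subf b g
| subf_impl : forall a b g, subf (Imp a b) g -> subf a g
| subf_impr : forall a b g, subf (Imp a b) g -> subf b g
| subf_delta : forall a g, subf (Delta a) g -> subf a g.

(* brIML1-frame: W non-empty, le a partial order, (1) le ⊆ R, (2) le;R ⊆ R *)
Definition brIML1_frame (W : Type) (le R : W -> W -> Prop) : Prop :=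
  inhabited W /\
  (forall w, le w w) /\
  (forall w v u, le w v -> le v u -> le w u) /\
  (forall w v, le w v -> le v w -> w = v) /\
  (forall w v, le w v -> R w v) /\
  (forall w v u, le w v -> R v u -> R w u).

Definition brIML1_model (W : Type) (le R : W -> W -> Prop) (V : nat -> W -> Prop)
  : Prop :=
  brIML1_frame le R /\ (forall p w v, V p w -> le w v -> V p v).

Fixpoint forces (W : Type) (le R : W -> W -> Prop) (V : nat -> W -> Prop)
  (w : W) (f : form) : Prop :=
  match f with
  | Var p => V p w
  | Bot => False
  | And a b => forces le R V w a /\ forces le R V w b
  | Or a b => forces le R V w a \/ forces le R V w b
  | Imp a b => forall v, le w v -> ~ forces le R V v a \/ forces le R V v b
  | Delta a => forall v, R w v -> forces le R V v a
  end.

Section Filtration.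
Variables (W : Type) (le R : W -> W -> Prop) (V : nat -> W -> Prop) (g : form).

Definition cls (w : W) : W -> Prop :=
  fun v => forall a, subf a g -> (forces le R V w a <-> forces le R V v a).

Definition WS : Type := { C : W -> Prop | exists w, C = cls w }.

Definition leS (X Y : WS) : Prop :=
  exists w v, proj1_sig X = cls w /\ proj1_sig Y = cls v /\
    (forall a, subf a g -> forces le R V w a -> forces le R V v a).

Definition RS (X Y : WS) : Prop :=
  exists w v, proj1_sig X = cls w /\ proj1_sig Y = cls v /\
    (forall b, subf (Delta b) g -> forces le R V w (Delta b) -> forces le R V v b).

End Filtration.

(* Main.v *)
Require Import Defs.
From Stdlib Require Import Classical FunctionalExtensionality PropExtensionality ProofIrrelevance.
Set Implicit Arguments.

Lemma cls_eq_agree (W : Type) (le R : W -> W -> Prop) (V : nat -> W -> Prop) (g : form) v v' :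
  cls le R V g v = cls le R V g v' ->
  forall a, subf a g -> (forces le R V v a <-> forces le R V v' a).
Proof.
  intros H a Ha.
  assert (Hv : cls le R V g v v) by (intros b _; tauto).
  rewrite H in Hv. specialize (Hv a Ha). tauto.
Qed.

Theorem theorem5p3 (W : Type) (le R : W -> W -> Prop) (V : nat -> W -> Prop)
  (g : form) :
  brIML1_model le R V ->
  (exists w : W, ~ forces le R V w g) ->
  brIML1_frame (@leS W le R V g) (@RS W le R V g).
Proof.
  intros [[[w0] [Hrefl [Htr [Hanti [HleR HlR]]]]] _] _.
  unfold brIML1_frame.
  split; [|split; [|split; [|split; [|split]]]].
  - constructor. exists (cls le R V g w0). exists w0. reflexivity.
  - intros [C [w Hw]]. exists w, w. simpl. auto.
  - intros [C1 H1] [C2 H2] [C3 H3] [w [v [E1 [E2 Hwv]]]] [v' [u [E2' [E3 Hvu]]]].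
    simpl in *. exists w, u. split; [exact E1|split; [exact E3|]].
    intros a Ha Hw. apply Hvu; auto. rewrite E2 in E2'.
    apply (cls_eq_agree E2' Ha). auto.
  - intros [C1 H1] [C2 H2] [w [v [E1 [E2 Hwv]]]] [v' [w' [E2' [E1' Hvw]]]].
    simpl in *.
    assert (C1 = C2).
    { rewrite E1, E2. apply functional_extensionality. intro u.
      apply propositional_extensionality.
      rewrite E1 in E1'. rewrite E2 in E2'.
      assert (Agr : forall a, subf a g -> (forces le R V w a <-> forces le R V v a)).
      { intros a Ha. split; intro Hf.
        - apply Hwv; auto.
        - apply (cls_eq_agree E1' Ha). apply Hvw; auto.
          apply (cls_eq_agree E2' Ha). auto. }
      unfold cls. split; intros Hc a Ha; specialize (Agr a Ha); specialize (Hc a Ha); tauto. }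
    clear E1 E1'. subst C1. f_equal. apply proof_irrelevance.
  - intros X Y [w [v [E1 [E2 Hwv]]]]. exists w, v. split; [exact E1|split; [exact E2|]].
    intros b Hb Hd. apply Hwv. eapply subf_delta; eauto.
    simpl in Hd. apply Hd. apply HleR. apply Hrefl.
  - intros X Y Z [w [v [E1 [E2 Hwv]]]] [v' [u [E2' [E3 Hvu]]]].
    exists w, u. split; [exact E1|split; [exact E3|]].
    intros b Hb Hd. apply Hvu; auto. rewrite E2 in E2'.
    apply (cls_eq_agree E2' Hb). apply Hwv; auto.
Qed.
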